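(* Let $(\check{x}, \check{y}) \in E$ be a feasible solution of (A). Suppose that the functions $\varphi_k$ are $\partial^{u}_D$-pseudoconvex at $(\check{x}, \check{y})$ for every $k = 1,\dots,n$, that the functions $\mathcal{H}_j$ ($j \in J_0(\check{x},\check{y})$), $\phi_s$ ($s \in S_0(\check{x},\check{y})$) and $\Psi$ are $\partial^{u}_D$-quasiconvex at $(\check{x}, \check{y})$, and that $(x,y) - (\check{x}, \check{y}) \in D$ for the feasible points $(x,y)\in E$. If there exists $\delta^* = (\xi^*, \tau^*, \rho^*, \eta^* ) \in \mathbb{R}_+^{n+p+q+1}$ with $\xi^* \neq 0_{\mathbb{R}^n}$ such that \[ (0,0) \in \sum_{k=1}^{n} \xi^*_k\, \partial^{us}_D \varphi_k(\check{x},\check{y}) + \sum_{j=1}^{p} \tau_j^*\, \partial^{u}_D \mathcal{H}_j(\check{x},\check{y}) + \sum_{s=1}^{q} \rho^*_s\, \partial^{u}_D \phi_s(\check{x},\check{y}) + \eta^*\, \partial^{u}_D \Psi(\check{x},\check{y}) + N_D(0_{n_1+n_2}), \] \[ \tau_j^* \mathcal{H}_j(\check{x},\check{y}) = 0 \ \ \forall j \in J, \qquad \rho^*_s \phi_s(\check{x},\check{y}) = 0 \ \ \forall s \in S, \] where $\partial^{us}_D \varphi_k(\check{x},\check{y}) = \partial^{us}_D \mathcal{F}_k(\check{x},\check{y}) + \Phi_k(\check{x},\check{y})\,\partial^{us}_D(-\mathcal{G}_k)(\check{x},\check{y})$, then $(\check{x}, \check{y})$ is a weak Pareto solution of (A)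.
   Context: Problem (A) is the multiobjective fractional bilevel problem: $\mathbb{R}^n_+$-minimize $\big(\mathcal{F}_1(x,y)/\mathcal{G}_1(x,y),\dots,\mathcal{F}_n(x,y)/\mathcal{G}_n(x,y)\big)$ over $(x,y)\in\mathbb{R}^{n_1}\times\mathbb{R}^{n_2}$ subject to $\mathcal{H}_j(x,y)\le 0$ for all $j\in J=\{1,\dots,p\}$ and $y\in\mathfrak{B}(x)$, where $\mathfrak{B}(x)$ is the solution set of the lower level problem $\min_y f(x,y)$ s.t. $\phi_s(x,y)\le 0$, $s\in S=\{1,\dots,q\}$; all functions are real-valued, and $\mathcal{F}_k\ge 0$, $\mathcal{G}_k>0$ on the feasible set. $(\check{x},\check{y})$ is a weak Pareto solution of (A) if there is no feasible $(x,y)$ with $\mathcal{F}_k(x,y)/\mathcal{G}_k(x,y) < \mathcal{F}_k(\check{x},\check{y})/\mathcal{G}_k(\check{x},\check{y})$ for all $k$. With $Y(x)=\{y:\phi_s(x,y)\le0\ \forall s\}$ uniformly bounded around $\check{x}$, $\Theta$ is the compact set $cl(\bigcup_{x\in \mathbb{U}_{\check{x}}}Y(x))$ plus the closed unit ball, $\Delta_C(z) = -d(z,\mathbb{R}^m\setminus C)$ if $z\in C$ and $d(z,C)$ otherwise, and $\Psi(x,y)=\max_{z\in\Theta}\min\{f(x,y)-f(x,z),\,-\Delta_{-\mathbb{R}^q_+}(\phi_1(x,z),\dots,\phi_q(x,z))\}$. The single-level feasible set is $E=\{(x,y): \mathcal{H}_j(x,y)\le0\ \forall j\in J,\ \phi_s(x,y)\le0\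 \forall s\in S,\ \Psi(x,y)\le0\}$. Set $\Phi_k(\check{x},\check{y})=\mathcal{F}_k(\check{x},\check{y})/\mathcal{G}_k(\check{x},\check{y})$ and $\varphi_k(x,y)=\mathcal{F}_k(x,y)-\Phi_k(\check{x},\check{y})\mathcal{G}_k(x,y)$. $J_0(\check{x},\check{y})=\{j:\mathcal{H}_j(\check{x},\check{y})=0\}$, $S_0(\check{x},\check{y})=\{s:\phi_s(\check{x},\check{y})=0\}$. A direction $d$ is a continuity direction of $h$ at $x$ if $h(x+p_kd)\to h(x)$ for all $p_k\searrow0$; $D$ is the intersection of the sets of continuity directions at $(\check{x},\check{y})$ of all $\Phi_k$, $\mathcal{H}_j$, $\phi_s$ and $\Psi$, and $N_D(0_{n_1+n_2})=T(D,0_{n_1+n_2})^\circ$ (negative polar of the contingent cone). A closed set $\partial^u_D h(x)$ is a directional upper convexificator (DUCF) of $h$ at $x$ if $h^-(x;d)\le\sup_{x^*\in\partial^u_D h(x)}\langle x^*,d\rangle$ for all $d\in D$, and a closed set $\partial^{us}_D h(x)$ is a directional upper semi-regular convexificator (DUSRCF) if the same holds with the upper Dini derivative $h^+(x;d)$; here $\mathcal{F}_k,-\mathcal{G}_k$ admit DUSRCFs and $\mathcal{H}_j,\phi_s,\Psi$ admit DUCFs at $(\check{x},\check{y})$. A function $h$ with directional convexificator $\partial^u_D h(\check{a},\check{b})$ is $\partial^u_D$-quasiconvex at $(\check{a},\check{b})$ if for all $(a,b)$ with $(a,b)-(\check{a},\check{b})\in D$: $h(a,b)\le h(\check{a},\check{b})$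 implies $\langle x^*,(a,b)-(\check{a},\check{b})\rangle\le0$ for all $x^*\in\partial^u_D h(\check{a},\check{b})$; it is $\partial^u_D$-pseudoconvex if for all $(a,b)$ with $(a,b)-(\check{a},\check{b})\in D\setminus\{0\}$: $h(a,b)<h(\check{a},\check{b})$ implies $\langle x^*,(a,b)-(\check{a},\check{b})\rangle<0$ for all $x^*\in\partial^u_D h(\check{a},\check{b})$. *)

(* Defs.v *)
From HB Require Import structures.
From mathcomp Require Import all_boot all_order all_algebra.
From mathcomp Require Import all_classical all_reals all_analysis.
Set Implicit Arguments. Unset Strict Implicit. Unset Printing Implicit Defensive.
Import Order.TTheory GRing.Theory Num.Theory.
Import numFieldNormedType.Exports.
Local Open Scope classical_set_scope.
Local Open Scope ring_scope.

Section Defs.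
Variables (R : realType) (n1 n2 : nat).

Definition pt := ('rV[R]_n1 * 'rV[R]_n2)%type.

Definition padd (a b : pt) : pt := (a.1 + b.1, a.2 + b.2).
Definition psub (a b : pt) : pt := (a.1 - b.1, a.2 - b.2).
Definition pscale (t : R) (a : pt) : pt := (t *: a.1, t *: a.2).
Definition pzero : pt := (0, 0).

Definition pdot (a b : pt) : R :=
  \sum_(i < n1) a.1 ord0 i * b.1 ord0 i + \sum_(i < n2) a.2 ord0 i * b.2 ord0 i.

Definition cont_dir (h : pt -> R) (a : pt) (d : pt) : Prop :=
  forall p : nat -> R,
    (forall k, 0 < p k) -> (forall k, p k.+1 <= p k) -> p @ \oo --> 0 ->
    (fun k => h (padd a (pscale (p k) d))) @ \oo --> h a.

Definition contingent (C : set pt) (a : pt) : set pt :=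
  [set v | exists (t : nat -> R) (w : nat -> pt),
      (forall k, 0 < t k) /\ t @ \oo --> 0 /\ w @ \oo --> v /\
      (forall k, C (padd a (pscale (t k) (w k))))].

Definition neg_polar (K : set pt) : set pt :=
  [set u | forall v, K v -> pdot u v <= 0].

Definition dini_quot (h : pt -> R) (a d : pt) (t : R) : R :=
  (h (padd a (pscale t d)) - h a) / t.

Definition dini_lower (h : pt -> R) (a d : pt) : \bar R :=
  ereal_sup [set ereal_inf [set (dini_quot h a d t)%:E | t in `]0, e[]
            | e in `]0, +oo[].

Definition dini_upper (h : pt -> R) (a d : pt) : \bar R :=
  ereal_inf [set ereal_sup [set (dini_quot h a d t)%:E | t in `]0, e[]
            | e in `]0, +oo[].

Definition sup_pairing (S : set pt) (d : pt) : \bar R :=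
  ereal_sup [set (pdot u d)%:E | u in S].

Definition DUCF (h : pt -> R) (a : pt) (D : set pt) (S : set pt) : Prop :=
  closed S /\ forall d, D d -> (dini_lower h a d <= sup_pairing S d)%E.

Definition DUSRCF (h : pt -> R) (a : pt) (D : set pt) (S : set pt) : Prop :=
  closed S /\ forall d, D d -> (dini_upper h a d <= sup_pairing S d)%E.

Definition quasiconvex_at (h : pt -> R) (a : pt) (D : set pt) (S : set pt) : Prop :=
  forall b, D (psub b a) -> h b <= h a -> forall u, S u -> pdot u (psub b a) <= 0.

Definition pseudoconvex_at (h : pt -> R) (a : pt) (D : set pt) (S : set pt) : Prop :=
  forall b, D (psub b a) -> psub b a <> pzero -> h b < h a ->
    forall u, S u -> pdot u (psub b a) < 0.

Definition msum_scale (S1 : set pt) (c : R) (S2 : set pt) : set pt :=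
  [set padd u (pscale c v) | u in S1 & v in S2].

End Defs.

Section Bilevel.
Variables (R : realType) (n1 n2 q : nat).

Definition enorm (m : nat) (z : 'rV[R]_m) : R := Num.sqrt (\sum_(i < m) z ord0 i ^+ 2).
Definition edist (m : nat) (z : 'rV[R]_m) (C : set 'rV[R]_m) : R :=
  inf [set enorm (z - c) | c in C].

Definition negorthant : set 'rV[R]_q := [set z | forall s, z ord0 s <= 0].

Definition Delta (C : set 'rV[R]_q) (z : 'rV[R]_q) : R :=
  if `[< C z >] then - edist z (~` C) else edist z C.

Variable phi : 'I_q -> pt R n1 n2 -> R.
Variable f : pt R n1 n2 -> R.

Definition Yset (x : 'rV[R]_n1) : set 'rV[R]_n2 := [set y | forall s, phi s (x, y) <= 0].

Definition Bset (x : 'rV[R]_n1) : set 'rV[R]_n2 :=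
  [set y | Yset x y /\ forall z, Yset x z -> f (x, y) <= f (x, z)].

Definition Theta (U : set 'rV[R]_n1) : set 'rV[R]_n2 :=
  [set a + b | a in closure (\bigcup_(x in U) Yset x)
             & b in [set b : 'rV[R]_n2 | enorm b <= 1]].

Definition phivec (x : 'rV[R]_n1) (z : 'rV[R]_n2) : 'rV[R]_q := \row_s phi s (x, z).

(* Psi (the max over the compact set Theta is written as a sup) *)
Definition Psi (U : set 'rV[R]_n1) (p : pt R n1 n2) : R :=
  sup [set Num.min (f p - f (p.1, z)) (- Delta negorthant (phivec p.1 z)) | z in Theta U].

End Bilevel.

Section Problem.
Variables (R : realType) (n1 n2 n p q : nat).
Variables (F G : 'I_n -> pt R n1 n2 -> R) (H : 'I_p -> pt R n1 n2 -> R)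
          (f : pt R n1 n2 -> R) (phi : 'I_q -> pt R n1 n2 -> R).

Definition feasA : set (pt R n1 n2) :=
  [set a | (forall j, H j a <= 0) /\ Bset phi f a.1 a.2].

Definition Eset (U : set 'rV[R]_n1) : set (pt R n1 n2) :=
  [set a | (forall j, H j a <= 0) /\ (forall s, phi s a <= 0) /\ Psi phi f U a <= 0].

Definition fratio (k : 'I_n) (a : pt R n1 n2) : R := F k a / G k a.

Definition varphi (ac : pt R n1 n2) (k : 'I_n) (a : pt R n1 n2) : R :=
  F k a - fratio k ac * G k a.

Definition weak_pareto (ac : pt R n1 n2) : Prop :=
  ~ exists a, feasA a /\ forall k, fratio k a < fratio k ac.

Definition Dset (U : set 'rV[R]_n1) (ac : pt R n1 n2) : set (pt R n1 n2) :=
  [set d | (forall k, cont_dir (fratio k) ac d) /\ (forall j, cont_dir (H j) ac d) /\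
           (forall s, cont_dir (phi s) ac d) /\ cont_dir (Psi phi f U) ac d].

End Problem.

(* Main.v *)
Require Import Defs.
From HB Require Import structures.
From mathcomp Require Import all_boot all_order all_algebra.
From mathcomp Require Import all_classical all_reals all_analysis.
Import Order.TTheory GRing.Theory Num.Theory.
Import numFieldNormedType.Exports.
Local Open Scope classical_set_scope.
Local Open Scope ring_scope.

From mathcomp Require Import lra.

Section Help.
Variables (R : realType) (n1 n2 : nat).
Implicit Types (x y d : pt R n1 n2).

Lemma pdotDl x y d : pdot (x + y) d = pdot x d + pdot y d.
Proof.
rewrite /pdot /=. under eq_bigr do rewrite mxE mulrDl. under [X in _ + X = _]eq_bigr do rewrite mxE mulrDl. rewrite !big_split /=; lra.
Qed.

Lemma pdot0l d : pdot (0 : pt R n1 n2) d = 0.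
Proof. by rewrite /pdot /= !big1 ?addr0 // => i _; rewrite mxE mul0r. Qed.

Lemma pdotZl c x d : pdot (pscale c x) d = c * pdot x d.
Proof.
rewrite /pdot /= mulrDr !mulr_sumr; congr (_ + _); apply: eq_bigr => i _;
  by rewrite mxE mulrA.
Qed.

Lemma pdot_sum (I : Type) (r : seq I) (P : pred I) (F : I -> pt R n1 n2) d :
  pdot (\sum_(i <- r | P i) F i) d = \sum_(i <- r | P i) pdot (F i) d.
Proof.
by apply: (big_morph (fun u => pdot u d)) => [u v|]; rewrite ?pdotDl ?pdot0l.
Qed.

Lemma cont_dir_scale (h : pt R n1 n2 -> R) a d c :
  0 < c -> cont_dir h a d -> cont_dir h a (pscale c d).
Proof.
move=> c0 hd p p0 pdec pc.
have h1 : forall k, 0 < p k * c by move=> k; rewrite mulr_gt0.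
have h2 : forall k, p k.+1 * c <= p k * c by move=> k; rewrite ler_pM2r.
have h3 : (fun k => p k * c) @ \oo --> 0.
  rewrite -(mul0r c); exact: cvgMl.
have := hd (fun k => p k * c) h1 h2 h3.
have -> : (fun k => h (padd a (pscale (p k * c) d))) =
          (fun k => h (padd a (pscale (p k) (pscale c d)))).
  by apply: funext => k; rewrite /pscale /= !scalerA.
by [].
Qed.

End Help.

Section Help2.
Variables (R : realType) (n1 n2 q : nat).
Variables (phi : 'I_q -> pt R n1 n2 -> R) (f : pt R n1 n2 -> R) (U : set 'rV[R]_n1).

Lemma edist_ge0 m (z : 'rV[R]_m) C : 0 <= Defs.edist z C.
Proof.
rewrite /Defs.edist; have [->|ne] := eqVneq C set0.
  by rewrite image_set0 inf0.
apply: lb_le_inf.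
  by have [c Cc] := (set0P C).1 ne; exists (enorm (z - c)); exists c.
by move=> _ [c _ <-]; rewrite /enorm sqrtr_ge0.
Qed.

Lemma Psi_elem_le0 x y z : Bset phi f x y ->
  Num.min (f (x, y) - f (x, z)) (- Delta (@negorthant R q) (phivec phi x z)) <= 0.
Proof.
move=> [Yy opt]; rewrite ge_min; apply/orP.
rewrite /Delta; case: asboolP => [C|_].
  left; rewrite subr_le0; apply: opt => s.
  by have := C s; rewrite mxE.
by right; rewrite oppr_le0 edist_ge0.
Qed.

Lemma Psi_le0 x y : Bset phi f x y -> Psi phi f U (x, y) <= 0.
Proof.
move=> B; rewrite /Psi /=.
set A := [set _ | _ in _].
have [->|ne] := eqVneq A set0; first by rewrite sup0.
apply: ge_sup; first exact/(set0P A).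
by move=> _ [z _ <-]; apply: Psi_elem_le0.
Qed.

Lemma enorm0 m : enorm (0 : 'rV[R]_m) = 0.
Proof.
rewrite /enorm big1 ?sqrtr0 // => i _; by rewrite mxE expr0n.
Qed.

Lemma Psi_ge0 x y : U x -> Bset phi f x y -> 0 <= Psi phi f U (x, y).
Proof.
move=> Ux B; rewrite /Psi /=.
have Th : Theta phi U y.
  exists y; last (exists 0; last by rewrite addr0); last by rewrite /= enorm0.
  apply: subset_closure; exists x => //; exact: B.1.
apply: (@le_trans _ _ (Num.min (f (x, y) - f (x, y)) (- Delta (@negorthant R q) (phivec phi x y)))).
  rewrite le_min subrr lexx /= /Delta; case: asboolP => [_|NC].
    by rewrite opprK edist_ge0.
  exfalso; apply: NC => s; rewrite mxE; exact: B.1.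
apply: ub_le_sup; last by exists y.
exists 0 => _ [z _ <-]; exact: Psi_elem_le0.
Qed.

End Help2.

Theorem theorem2 (R : realType) (n1 n2 n p q : nat)
  (F G : 'I_n -> pt R n1 n2 -> R) (H : 'I_p -> pt R n1 n2 -> R)
  (f : pt R n1 n2 -> R) (phi : 'I_q -> pt R n1 n2 -> R)
  (U : set 'rV[R]_n1) (xc : 'rV[R]_n1) (yc : 'rV[R]_n2)
  (dF dmG : 'I_n -> set (pt R n1 n2)) (dH : 'I_p -> set (pt R n1 n2))
  (dphi : 'I_q -> set (pt R n1 n2)) (dPsi : set (pt R n1 n2))
  (xi : 'I_n -> R) (tau : 'I_p -> R) (rho : 'I_q -> R) (eta : R) :
  (* standing assumptions *)
  nbhs xc U ->
  bounded_set (\bigcup_(x in U) Yset phi x) ->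
  (forall a, feasA H f phi a -> forall k, 0 <= F k a) ->
  (forall a, feasA H f phi a -> forall k, 0 < G k a) ->
  let ac : pt R n1 n2 := (xc, yc) in
  let D := Dset F G H f phi U ac in
  let Psi0 := Psi phi f U in
  (forall k, DUSRCF (F k) ac D (dF k)) ->
  (forall k, DUSRCF (fun a => - G k a) ac D (dmG k)) ->
  (forall j, DUCF (H j) ac D (dH j)) ->
  (forall s, DUCF (phi s) ac D (dphi s)) ->
  DUCF Psi0 ac D dPsi ->
  (* the point *)
  Eset H f phi U ac -> feasA H f phi ac ->
  (* generalized convexity *)
  (forall k, pseudoconvex_at (varphi F G ac k) ac D
               (msum_scale (dF k) (fratio F G k ac) (dmG k))) ->
  (forall j, H j ac = 0 -> quasiconvex_at (H j) ac D (dH j)) ->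
  (forall s, phi s ac = 0 -> quasiconvex_at (phi s) ac D (dphi s)) ->
  quasiconvex_at Psi0 ac D dPsi ->
  (forall a, Eset H f phi U a -> D (psub a ac)) ->
  (* multipliers *)
  (forall k, 0 <= xi k) -> (exists k, xi k != 0) ->
  (forall j, 0 <= tau j) -> (forall s, 0 <= rho s) -> 0 <= eta ->
  (exists (u : 'I_n -> pt R n1 n2) (v : 'I_p -> pt R n1 n2)
          (w : 'I_q -> pt R n1 n2) (z : pt R n1 n2) (nu : pt R n1 n2),
     (forall k, msum_scale (dF k) (fratio F G k ac) (dmG k) (u k)) /\
     (forall j, dH j (v j)) /\ (forall s, dphi s (w s)) /\ dPsi z /\
     neg_polar (contingent D (pzero R n1 n2)) nu /\
     (\sum_(k < n) pscale (xi k) (u k)).1 + (\sum_(j < p) pscale (tau j) (v j)).1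
       + (\sum_(s < q) pscale (rho s) (w s)).1 + (pscale eta z).1 + nu.1 = 0 /\
     (\sum_(k < n) pscale (xi k) (u k)).2 + (\sum_(j < p) pscale (tau j) (v j)).2
       + (\sum_(s < q) pscale (rho s) (w s)).2 + (pscale eta z).2 + nu.2 = 0) ->
  (forall j, tau j * H j ac = 0) ->
  (forall s, rho s * phi s ac = 0) ->
  weak_pareto F G H f phi ac.
Proof.
move=> hU hbdd hF hG ac D Psi0 hdF hdmG hdH hdphi hdPsi hE hfeas hpc hqH hqphi
  hqPsi hD hxi hxi0 htau hrho heta hmult hcH hcphi.
move=> [[ax ay] [[hHa hBa] hlt]].
set a : pt R n1 n2 := (ax, ay).
have Ea : Eset H f phi U a.
  split; first exact: hHa.
  split; first by move=> s; exact: hBa.1.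
  exact: Psi_le0.
have Dd := hD a Ea.
set d := psub a ac.
have hPsi : Psi0 a <= Psi0 ac.
  apply: (@le_trans _ _ 0); first exact: Psi_le0.
  apply: Psi_ge0; first exact: nbhs_singleton hU.
  exact: hfeas.2.
have [k0 xk0] := hxi0.
have dne : d <> pzero R n1 n2.
  move=> hd0.
  have eq : a = ac.
    move: hd0; rewrite /d /psub /pzero /= => [[h1 h2]].
    by rewrite /a /ac; congr pair; apply/eqP; rewrite -subr_eq0; apply/eqP.
  by have := hlt k0; rewrite -/a eq ltxx.
have hvk : forall k, varphi F G ac k a < varphi F G ac k ac.
  move=> k.
  have Gac := hG ac hfeas k.
  have Ga := hG a (conj hHa hBa) k.
  have -> : varphi F G ac k ac = 0.
    by rewrite /varphi /fratio divfK ?subrr // gt_eqF.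
  have := hlt k; rewrite /varphi {1}/fratio ltr_pdivrMr // => h.
  by rewrite subr_lt0.
have [u [v [w [z [nu [hu [hv [hw [hz [hnu [e1 e2]]]]]]]]]]] := hmult.
have hA : \sum_(k < n) xi k * pdot (u k) d < 0.
  rewrite (bigD1 k0) //=.
  have h1 : xi k0 * pdot (u k0) d < 0.
    rewrite pmulr_rlt0; first exact: (hpc k0 a Dd dne (hvk k0) (u k0) (hu k0)).
    by rewrite lt_def xk0 hxi.
  have h2 : \sum_(i < n | i != k0) xi i * pdot (u i) d <= 0.
    apply: sumr_le0 => i _; apply: mulr_ge0_le0 => //.
    exact/ltW/(hpc i a Dd dne (hvk i) (u i) (hu i)).
  lra.
have hB : \sum_(j < p) tau j * pdot (v j) d <= 0.
  apply: sumr_le0 => j _; have [->|tj] := eqVneq (tau j) 0; first by rewrite mul0r.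
  have H0 : H j ac = 0.
    by have /eqP := hcH j; rewrite mulf_eq0 (negbTE tj) /= => /eqP.
  apply: mulr_ge0_le0 => //; apply: (hqH j H0 a Dd _ (v j) (hv j)).
  by rewrite H0; exact: hHa.
have hC : \sum_(s < q) rho s * pdot (w s) d <= 0.
  apply: sumr_le0 => s _; have [->|ts] := eqVneq (rho s) 0; first by rewrite mul0r.
  have H0 : phi s ac = 0.
    by have /eqP := hcphi s; rewrite mulf_eq0 (negbTE ts) /= => /eqP.
  apply: mulr_ge0_le0 => //; apply: (hqphi s H0 a Dd _ (w s) (hw s)).
  by rewrite H0; exact: hBa.1.
have hEt : eta * pdot z d <= 0.
  by apply: mulr_ge0_le0 => //; exact: (hqPsi a Dd hPsi z hz).
have hN : pdot nu d <= 0.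
  apply: hnu; exists harmonic, (fun _ => d); split; first exact: harmonic_gt0.
  split; first exact: cvg_harmonic.
  split; first exact: cvg_cst.
  move=> k.
  have -> : padd (pzero R n1 n2) (pscale (harmonic k) d) = pscale (harmonic k) d.
    by case: (pscale (harmonic k) d) => ? ?; rewrite /padd /= !add0r.
  have hk := @harmonic_gt0 R k.
  move: Dd => [D1 [D2 [D3 D4]]].
  split; first by move=> i; apply: cont_dir_scale.
  split; first by move=> i; apply: cont_dir_scale.
  split; first by move=> i; apply: cont_dir_scale.
  exact: cont_dir_scale.
set T := (\sum_(k < n) pscale (xi k) (u k)) + (\sum_(j < p) pscale (tau j) (v j))
       + (\sum_(s < q) pscale (rho s) (w s)) + (pscale eta z) + nu.
have hT : T = 0.
  have -> : T = (T.1, T.2) by case: T.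
  have -> : T.1 = 0 by exact: e1.
  have -> : T.2 = 0 by exact: e2.
  by [].
have := pdot0l R n1 n2 d; rewrite -hT /T !pdotDl !pdot_sum pdotZl.
under eq_bigr do rewrite pdotZl.
under [X in _ + X + _ + _ + _ = _ -> _]eq_bigr do rewrite pdotZl.
under [X in _ + _ + X + _ + _ = _ -> _]eq_bigr do rewrite pdotZl.
lra.
Qed.
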